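(* Let $a<b$, let $f\in C([a,b])$ be complex valued, let $g\in C^1([a,b])$ be real valued with $|g'|>0$ on $[a,b]$, and let $p:\mathbb{C}\to\mathbb{C}$ be a polynomial. Then \[ \Big|\int_a^be^{ig(x)}f(x)dx-e^{ig(a)}\sum_{k=0}^{\deg p}i^{k+1}p^{(k)}(g(a))+e^{ig(b)}\sum_{k=0}^{\deg p}i^{k+1}p^{(k)}(g(b))\Big|\le\|f-(p\circ g)g'\|_{L^1(a,b)}. \]
   Context: $p^{(k)}$ denotes the $k$-th derivative of $p$. *)

(* Defs.v *)
From Stdlib Require Import Reals List.
From Coquelicot Require Import Coquelicot.
Open Scope R_scope.

Definition continuous_on_cc {V : UniformSpace} (f : R -> V) (a b : R) : Prop :=
  forall x, a <= x <= b ->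
    filterlim f (within (fun y => a <= y <= b) (locally x)) (locally (f x)).

Definition C1_on_cc (g dg : R -> R) (a b : R) : Prop :=
  continuous_on_cc g a b /\
  (forall x, a < x < b -> is_derive g x (dg x)) /\
  continuous_on_cc dg a b.

(* Complex polynomials, represented by their coefficient list [c0; c1; ...; cn],
   p(z) = c0 + c1 z + ... + cn z^n (Horner evaluation). *)
Definition poly_eval (cs : list C) (z : C) : C :=
  fold_right (fun c acc => (c + z * acc)%C) (RtoC 0) cs.

Fixpoint poly_deriv_aux (n : nat) (l : list C) : list C :=
  match l with
  | nil => nil
  | c :: l' => (RtoC (INR n) * c)%C :: poly_deriv_aux (S n) l'
  end.
Definition poly_deriv (cs : list C) : list C := poly_deriv_aux 1 (tl cs).

Fixpoint poly_deriv_n (k : nat) (cs : list C) : list C :=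
  match k with
  | O => cs
  | S k' => poly_deriv (poly_deriv_n k' cs)
  end.

(* Degree: largest index of a nonzero coefficient (0 for the zero polynomial). *)
Fixpoint poly_deg (cs : list C) : nat :=
  match cs with
  | nil => O
  | c :: l => match l with
              | nil => O
              | _ => if forallb (fun d => if Ceq_dec d (RtoC 0) then true else false) l
                     then O else S (poly_deg l)
              end
  end.

Definition expi (t : R) : C := (cos t, sin t).

(* Main.v *)
Require Import Defs.
From Stdlib Require Import Reals List Lra Lia.
From Coquelicot Require Import Coquelicot.
Open Scope R_scope.

Definition isz (d : C) : bool := if Ceq_dec d (RtoC 0) then true else false.
Definition allz (l : list C) : Prop := forallb isz l = true.

Lemma allz_eval l z : allz l -> poly_eval l z = RtoC 0.
Proof.
  induction l as [|c l IH]; simpl; auto.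
  unfold allz; simpl. intros H. apply andb_prop in H as [H1 H2].
  unfold isz in H1. destruct (Ceq_dec c (RtoC 0)) as [->|]; [|discriminate].
  rewrite IH by exact H2. ring.
Qed.

Lemma allz_aux n l : allz l -> allz (poly_deriv_aux n l).
Proof.
  revert n; induction l as [|c l IH]; intros n; simpl; auto.
  unfold allz; simpl. intros H. apply andb_prop in H as [H1 H2].
  unfold isz in H1. destruct (Ceq_dec c (RtoC 0)) as [->|]; [|discriminate].
  apply andb_true_intro; split.
  - unfold isz. destruct Ceq_dec as [|n0]; auto. exfalso; apply n0; ring.
  - apply IH; exact H2.
Qed.

Lemma allz_tl l : allz l -> allz (tl l).
Proof. destruct l; simpl; auto. unfold allz; simpl. intros H; apply andb_prop in H; tauto. Qed.

Lemma allz_deriv l : allz l -> allz (poly_deriv l).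
Proof. intros; apply allz_aux, allz_tl; auto. Qed.

Lemma allz_deriv_n k l : allz l -> allz (poly_deriv_n k l).
Proof. induction k; simpl; auto. intros; apply allz_deriv; auto. Qed.

Lemma isz_scal n c : (0 < n)%nat -> isz (RtoC (INR n) * c)%C = isz c.
Proof.
  intros Hn. unfold isz. destruct (Ceq_dec c (RtoC 0)) as [->|Hc];
  destruct Ceq_dec as [E|E]; auto.
  - exfalso; apply E; ring.
  - exfalso; apply Hc. assert (INR n <> 0) by (apply not_0_INR; lia).
    apply (f_equal (fun w => Cmult (RtoC (/ INR n)) w)) in E.
    rewrite Cmult_assoc in E. rewrite Cmult_0_r in E. rewrite <- E.
    replace (RtoC (/ INR n) * RtoC (INR n))%C with (RtoC 1).
    ring. rewrite <- RtoC_mult. f_equal. field. auto.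
Qed.

Lemma forallb_aux n l : (0 < n)%nat -> forallb isz (poly_deriv_aux n l) = forallb isz l.
Proof.
  revert n; induction l as [|c l IH]; intros n Hn; simpl; auto.
  rewrite isz_scal by auto. rewrite IH by lia. auto.
Qed.

Lemma deg_cons c l : poly_deg (c :: l) = match l with nil => O | _ => if forallb isz l then O else S (poly_deg l) end.
Proof. reflexivity. Qed.
Lemma aux_cons n c l : poly_deriv_aux n (c :: l) = (RtoC (INR n) * c)%C :: poly_deriv_aux (S n) l.
Proof. reflexivity. Qed.

Lemma deg_aux n l : (0 < n)%nat -> poly_deg (poly_deriv_aux n l) = poly_deg l.
Proof.
  revert n; induction l as [|c l IH]; intros n Hn; [reflexivity|].
  rewrite aux_cons, !deg_cons.
  destruct l as [|c' l']; [reflexivity|].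
  rewrite aux_cons. rewrite <- aux_cons.
  rewrite forallb_aux by lia.
  destruct (forallb isz (c' :: l')); auto.
Qed.

Lemma deriv_n_S k l : poly_deriv_n (S k) l = poly_deriv_n k (poly_deriv l).
Proof. induction k as [|k IHk]; [reflexivity|].
  change (poly_deriv (poly_deriv_n (S k) l) = poly_deriv (poly_deriv_n k (poly_deriv l))). rewrite IHk; reflexivity. Qed.

Lemma deg0_deriv l : poly_deg l = O -> allz (poly_deriv l).
Proof.
  destruct l as [|c l]; [reflexivity|]. rewrite deg_cons.
  unfold poly_deriv; simpl tl.
  destruct l as [|c' l']; [reflexivity|].
  destruct (forallb isz (c' :: l')) eqn:E; [|discriminate].
  intros _. apply allz_aux. exact E.
Qed.

Lemma degS_deriv l d : poly_deg l = S d -> poly_deg (poly_deriv l) = d.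
Proof.
  destruct l as [|c l]; [discriminate|]. rewrite deg_cons.
  unfold poly_deriv; simpl tl.
  destruct l as [|c' l']; [discriminate|].
  destruct (forallb isz (c' :: l')) eqn:E; [discriminate|].
  intros H; injection H; intros <-. apply deg_aux; lia.
Qed.

Lemma deriv_top d l : poly_deg l = d -> allz (poly_deriv_n (S d) l).
Proof.
  revert l; induction d; intros l H.
  - simpl. apply deg0_deriv; auto.
  - rewrite deriv_n_S. apply IHd. apply degS_deriv; auto.
Qed.

Lemma eval_aux n l (t : C) : poly_eval (poly_deriv_aux n l) t =
  (RtoC (INR n) * poly_eval l t + t * poly_eval (poly_deriv l) t)%C.
Proof.
  revert n; induction l as [|c l IH]; intros n.
  - simpl. ring.
  - change (poly_eval (poly_deriv_aux n (c :: l)) t) with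
      ((RtoC (INR n) * c) + t * poly_eval (poly_deriv_aux (S n) l) t)%C.
    change (poly_eval (c :: l) t) with (c + t * poly_eval l t)%C.
    change (poly_eval (poly_deriv (c :: l)) t) with (poly_eval (poly_deriv_aux 1 l) t).
    rewrite !IH. rewrite S_INR. rewrite RtoC_plus. simpl (INR 1). ring.
Qed.

Definition CD (u : R -> C) (t : R) (du : C) : Prop :=
  is_derive (fun s => fst (u s)) t (fst du) /\ is_derive (fun s => snd (u s)) t (snd du).

Lemma RD (f : R -> R) (x l l' : R) : is_derive f x l -> l = l' -> is_derive f x l'.
Proof. intros H <-; exact H. Qed.

Lemma Rd_mult (f g : R -> R) x df dg : is_derive f x df -> is_derive g x dg ->
  is_derive (fun s => f s * g s) x (df * g x + f x * dg).
Proof. intros F G. exact (is_derive_mult f g x df dg F G Rmult_comm). Qed.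
Lemma Rd_plus (f g : R -> R) x df dg : is_derive f x df -> is_derive g x dg ->
  is_derive (fun s => f s + g s) x (df + dg).
Proof. intros F G. exact (is_derive_plus f g x df dg F G). Qed.
Lemma Rd_minus (f g : R -> R) x df dg : is_derive f x df -> is_derive g x dg ->
  is_derive (fun s => f s - g s) x (df - dg).
Proof. intros F G. exact (is_derive_minus f g x df dg F G). Qed.
Lemma Rd_comp (f g : R -> R) x df dg : is_derive f (g x) df -> is_derive g x dg ->
  is_derive (fun s => f (g s)) x (dg * df).
Proof. intros F G. exact (is_derive_comp f g x df dg F G). Qed.

Lemma CD_eq u t du du' : CD u t du -> du = du' -> CD u t du'.
Proof. intros H <-; exact H. Qed.

Lemma CD_ext u v t du : (forall s, u s = v s) -> CD u t du -> CD v t du.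
Proof.
  intros E [H1 H2]; split; (eapply is_derive_ext; [|eassumption]); intros s; simpl; rewrite E; auto.
Qed.

Lemma CD_const c t : CD (fun _ => c) t (RtoC 0).
Proof. split; simpl; (eapply RD; [apply is_derive_const|reflexivity]). Qed.

Lemma CD_id t : CD (fun s => RtoC s) t (RtoC 1).
Proof. split; simpl. eapply RD; [apply is_derive_id|reflexivity]. eapply RD; [apply is_derive_const|reflexivity]. Qed.

Lemma CD_plus u v t du dv : CD u t du -> CD v t dv ->
  CD (fun s => u s + v s)%C t (du + dv)%C.
Proof.
  intros [U1 U2] [V1 V2]; split; simpl.
  - apply (is_derive_plus _ _ _ _ _ U1 V1).
  - apply (is_derive_plus _ _ _ _ _ U2 V2).
Qed.

Lemma CD_mult u v t du dv : CD u t du -> CD v t dv ->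
  CD (fun s => u s * v s)%C t (du * v t + u t * dv)%C.
Proof.
  intros [U1 U2] [V1 V2]; split; simpl.
  - eapply RD; [apply Rd_minus; apply Rd_mult; eauto|]; cbv beta; ring.
  - eapply RD; [apply Rd_plus; apply Rd_mult; eauto|]; cbv beta; ring.
Qed.

Lemma CD_comp u g t du dg : CD u (g t) du -> is_derive g t dg ->
  CD (fun s => u (g s)) t (du * RtoC dg)%C.
Proof.
  intros [U1 U2] G; split; simpl.
  - eapply RD; [apply (Rd_comp (fun s => fst (u s)) g); eauto|]; cbv beta; ring.
  - eapply RD; [apply (Rd_comp (fun s => snd (u s)) g); eauto|]; cbv beta; ring.
Qed.

Lemma CD_expi t : CD expi t (Ci * expi t)%C.
Proof.
  split; simpl.
  - eapply RD; [apply is_derive_cos|]. simpl. ring.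
  - eapply RD; [apply is_derive_sin|]. simpl. ring.
Qed.

Lemma CD_poly cs t : CD (fun s => poly_eval cs (RtoC s)) t (poly_eval (poly_deriv cs) (RtoC t)).
Proof.
  induction cs as [|c l IH].
  - apply CD_ext with (u := fun _ => RtoC 0); [reflexivity|]. exact (CD_const (RtoC 0) t).
  - apply CD_ext with (u := fun s => (c + RtoC s * poly_eval l (RtoC s))%C); [reflexivity|].
    change (poly_eval (poly_deriv (c :: l)) (RtoC t)) with (poly_eval (poly_deriv_aux 1 l) (RtoC t)).
    rewrite eval_aux. change (INR 1) with 1.
    eapply CD_eq.
    + apply (CD_plus (fun _ => c) (fun s => RtoC s * poly_eval l (RtoC s))%C).
      * apply CD_const.
      * apply (CD_mult (fun s => RtoC s) (fun s => poly_eval l (RtoC s))). apply CD_id. exact IH.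
    + ring.
Qed.

Lemma sum_SnC (a : nat -> C) n : sum_n a (S n) = (sum_n a n + a (S n))%C.
Proof. exact (sum_Sn a n). Qed.

Definition Ssum (p : list C) (N : nat) (z : C) : C :=
  sum_n (fun k => (Ci ^ (k + 1) * poly_eval (poly_deriv_n k p) z)%C) N.
Definition Ssum' (p : list C) (N : nat) (z : C) : C :=
  sum_n (fun k => (Ci ^ (k + 1) * poly_eval (poly_deriv_n (S k) p) z)%C) N.

Lemma CD_term p k t : CD (fun s => Ci ^ (k + 1) * poly_eval (poly_deriv_n k p) (RtoC s))%C t
   (Ci ^ (k + 1) * poly_eval (poly_deriv_n (S k) p) (RtoC t))%C.
Proof.
  eapply CD_eq.
  - apply (CD_mult (fun _ => Ci ^ (k + 1))%C (fun s => poly_eval (poly_deriv_n k p) (RtoC s))).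
    + apply CD_const.
    + apply CD_poly.
  - rewrite Cmult_0_l, Cplus_0_l. reflexivity.
Qed.

Lemma CD_Ssum p N t : CD (fun s => Ssum p N (RtoC s)) t (Ssum' p N (RtoC t)).
Proof.
  induction N as [|N IH].
  - apply CD_ext with (u := fun s => (Ci ^ (0 + 1) * poly_eval (poly_deriv_n 0 p) (RtoC s))%C).
    + intros s. unfold Ssum. rewrite sum_O. reflexivity.
    + unfold Ssum'. rewrite sum_O. apply CD_term.
  - apply CD_ext with (u := fun s => (Ssum p N (RtoC s) + Ci ^ (S N + 1) * poly_eval (poly_deriv_n (S N) p) (RtoC s))%C).
    + intros s. unfold Ssum. rewrite sum_Sn. reflexivity.
    + unfold Ssum' at 1. rewrite sum_Sn. apply CD_plus. exact IH. apply CD_term.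
Qed.

Lemma Ci2 : (Ci * Ci = - RtoC 1)%C.
Proof. unfold Ci, RtoC, Cmult, Copp; simpl. f_equal; ring. Qed.

Lemma Ssum_rel p N z : (Ci * Ssum p N z + Ssum' p N z =
   - poly_eval p z + Ci ^ (N + 1) * poly_eval (poly_deriv_n (S N) p) z)%C.
Proof.
  unfold Ssum, Ssum'. induction N as [|N IH].
  - rewrite !sum_O. change (0+1)%nat with 1%nat. change (Ci ^ 1)%C with (Ci * 1)%C.
    transitivity (Ci * Ci * poly_eval (poly_deriv_n 0 p) z + Ci * poly_eval (poly_deriv_n 1 p) z)%C.
    ring. rewrite Ci2. change (poly_deriv_n 0 p) with p. ring.
  - rewrite !sum_SnC.
    transitivity ((Ci * sum_n (fun k : nat => Ci ^ (k + 1) * poly_eval (poly_deriv_n k p) z) N +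
     sum_n (fun k : nat => Ci ^ (k + 1) * poly_eval (poly_deriv_n (S k) p) z) N)
     + Ci * (Ci ^ (S N + 1) * poly_eval (poly_deriv_n (S N) p) z) 
     + Ci ^ (S N + 1) * poly_eval (poly_deriv_n (S (S N)) p) z)%C.
    ring. rewrite IH.
    replace (S N + 1)%nat with (S (N + 1)) by lia. simpl Cpow.
    replace (Ci * (Ci * Ci ^ (N+1) * poly_eval (poly_deriv_n (S N) p) z))%C
      with (Ci * Ci * (Ci ^ (N+1) * poly_eval (poly_deriv_n (S N) p) z))%C by ring.
    rewrite Ci2. ring.
Qed.

Lemma ballR (x e y : R) : ball x e y <-> Rabs (y - x) < e.
Proof. split; intros H; exact H. Qed.

Definition clamp (a b x : R) : R := Rmax a (Rmin b x).

Lemma clamp_in a b x : a <= b -> a <= clamp a b x <= b.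
Proof. intros. unfold clamp, Rmax, Rmin. repeat destruct Rle_dec; lra. Qed.

Lemma clamp_id a b x : a <= x <= b -> clamp a b x = x.
Proof. intros. unfold clamp, Rmax, Rmin. repeat destruct Rle_dec; lra. Qed.

Lemma clamp_lip a b x y : Rabs (clamp a b y - clamp a b x) <= Rabs (y - x).
Proof. unfold clamp, Rmax, Rmin. repeat destruct Rle_dec; unfold Rabs; repeat destruct Rcase_abs; lra. Qed.

Lemma clamp_cont a b x : continuous (clamp a b) x.
Proof.
  apply filterlim_locally. intros eps. exists eps. intros y Hy.
  apply ballR in Hy. apply ballR. eapply Rle_lt_trans. apply clamp_lip. exact Hy.
Qed.

Lemma cont_clamp {V : UniformSpace} (h : R -> V) a b x :
  a <= b -> continuous_on_cc h a b -> continuous (fun y => h (clamp a b y)) x.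
Proof.
  intros Hab Hh.
  assert (Hc := clamp_in a b x Hab).
  specialize (Hh _ Hc).
  unfold continuous.
  eapply filterlim_comp; [|exact Hh].
  intros P HP. unfold filtermap.
  unfold within in HP.
  assert (H2 := clamp_cont a b x _ HP). unfold filtermap in H2.
  eapply filter_imp; [|exact H2]. intros y Hy. apply Hy. apply clamp_in; auto.
Qed.

Lemma endpoint_b (F I : R -> R) a b k : a < b ->
  (forall y, a < y < b -> F y - I y = k) ->
  filterlim F (within (fun y => a <= y <= b) (locally b)) (locally (F b)) ->
  continuous I b -> F b - I b = k.
Proof.
  intros Hab Hk HF HI.
  destruct (Req_dec (F b - I b) k) as [E|NE]; auto. exfalso.
  set (e := Rabs (F b - I b - k) / 4).
  assert (He : 0 < e). { unfold e. assert (0 < Rabs (F b - I b - k)) by (apply Rabs_pos_lt; lra). lra. }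
  set (ep := mkposreal e He).
  apply filterlim_locally with (eps := ep) in HF.
  apply filterlim_locally with (eps := ep) in HI.
  unfold within in HF. destruct (filter_and _ _ HF HI) as [d Hd].
  set (y := Rmax ((a + b) / 2) (b - d / 2)).
  assert (Hy1 : a < y < b). { unfold y, Rmax. destruct Rle_dec; destruct d; simpl in *; lra. }
  assert (Hy2 : ball b d y). { apply ballR. unfold y, Rmax. destruct Rle_dec; destruct d; simpl in *; unfold Rabs; destruct Rcase_abs; lra. }
  destruct (Hd y Hy2) as [H1 H2].
  specialize (H1 (conj (Rlt_le _ _ (proj1 Hy1)) (Rlt_le _ _ (proj2 Hy1)))).
  apply ballR in H1. apply ballR in H2. simpl in H1, H2.
  specialize (Hk y Hy1).
  unfold e in H1, H2.
  assert (A1 : Rabs (F y - F b) < Rabs (F b - I b - k) / 4) by exact H1.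
  assert (A2 : Rabs (I y - I b) < Rabs (F b - I b - k) / 4) by exact H2.
  clear H1 H2. rewrite <- Hk in A1, A2. revert A1 A2. unfold Rabs. repeat destruct Rcase_abs; lra.
Qed.

Lemma endpoint_a (F I : R -> R) a b k : a < b ->
  (forall y, a < y < b -> F y - I y = k) ->
  filterlim F (within (fun y => a <= y <= b) (locally a)) (locally (F a)) ->
  continuous I a -> F a - I a = k.
Proof.
  intros Hab Hk HF HI.
  destruct (Req_dec (F a - I a) k) as [E|NE]; auto. exfalso.
  set (e := Rabs (F a - I a - k) / 4).
  assert (He : 0 < e). { unfold e. assert (0 < Rabs (F a - I a - k)) by (apply Rabs_pos_lt; lra). lra. }
  set (ep := mkposreal e He).
  apply filterlim_locally with (eps := ep) in HF.
  apply filterlim_locally with (eps := ep) in HI.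
  unfold within in HF. destruct (filter_and _ _ HF HI) as [d Hd].
  set (y := Rmin ((a + b) / 2) (a + d / 2)).
  assert (Hy1 : a < y < b). { unfold y, Rmin. destruct Rle_dec; destruct d; simpl in *; lra. }
  assert (Hy2 : ball a d y). { apply ballR. unfold y, Rmin. destruct Rle_dec; destruct d; simpl in *; unfold Rabs; destruct Rcase_abs; lra. }
  destruct (Hd y Hy2) as [H1 H2].
  specialize (H1 (conj (Rlt_le _ _ (proj1 Hy1)) (Rlt_le _ _ (proj2 Hy1)))).
  specialize (Hk y Hy1).
  unfold ep, e in H1, H2; simpl in H1, H2.
  assert (A1 : Rabs (F y - F a) < Rabs (F a - I a - k) / 4) by exact H1.
  assert (A2 : Rabs (I y - I a) < Rabs (F a - I a - k) / 4) by exact H2.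
  clear H1 H2. rewrite <- Hk in A1, A2. revert A1 A2. unfold Rabs. repeat destruct Rcase_abs; lra.
Qed.

Lemma wFTC (F f : R -> R) a b : a < b ->
  (forall x, a < x < b -> is_derive F x (f x)) ->
  (forall x, continuous f x) ->
  continuous_on_cc F a b ->
  is_RInt f a b (F b - F a).
Proof.
  intros Hab HD Hf HF.
  assert (Ex : forall u v, ex_RInt f u v) by (intros; apply (ex_RInt_continuous (V:=R_CompleteNormedModule)); auto).
  set (I := fun x => RInt f a x).
  assert (HIc : forall x, continuous I x).
  { intros x. apply (continuous_RInt_1 (V:=R_NormedModule) f a x I). apply filter_forall. intros z. exact (RInt_correct (V:=R_CompleteNormedModule) f a z (Ex a z)). }
  set (m := (a + b) / 2).
  assert (Hk : forall y, a < y < b -> F y - I y = F m - I m).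
  { intros y Hy.
    assert (H1 : is_RInt f m y (F y - F m)).
    { apply (is_RInt_derive F f m y).
      - intros x Hx. apply HD. unfold m in *. unfold Rmin, Rmax in Hx. destruct Rle_dec; lra.
      - intros; apply Hf. }
    assert (H2 : RInt f a y = RInt f a m + RInt f m y).
    { symmetry. apply (RInt_Chasles f a m y); auto. }
    assert (H1' : RInt f m y = F y - F m) by exact (is_RInt_unique (V:=R_CompleteNormedModule) f m y _ H1).
    unfold I. rewrite H2, H1'. ring. }
  assert (Eb := endpoint_b F I a b _ Hab Hk (HF b (conj (Rlt_le _ _ Hab) (Rle_refl b))) (HIc b)).
  assert (Ea := endpoint_a F I a b _ Hab Hk (HF a (conj (Rle_refl a) (Rlt_le _ _ Hab))) (HIc a)).
  assert (I a = 0) by (unfold I; exact (RInt_point (V:=R_CompleteNormedModule) a f)).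
  assert (I b = F b - F a) by lra.
  rewrite <- H0. unfold I. exact (RInt_correct (V:=R_CompleteNormedModule) f a b (Ex a b)).
Qed.

Lemma Rc_mult (f g : R -> R) x : continuous f x -> continuous g x -> continuous (fun y => f y * g y) x.
Proof. intros F G. exact (continuous_mult (K:=R_AbsRing) f g x F G). Qed.
Lemma Rc_plus (f g : R -> R) x : continuous f x -> continuous g x -> continuous (fun y => f y + g y) x.
Proof. intros F G. exact (continuous_plus (V:=R_NormedModule) f g x F G). Qed.
Lemma Rc_minus (f g : R -> R) x : continuous f x -> continuous g x -> continuous (fun y => f y - g y) x.
Proof. intros F G. exact (continuous_minus (V:=R_NormedModule) f g x F G). Qed.
Lemma Rc_opp (f : R -> R) x : continuous f x -> continuous (fun y => - f y) x.
Proof. intros F. exact (continuous_opp (V:=R_NormedModule) f x F). Qed.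
Lemma Rc_const (c : R) x : continuous (fun _ : R => c) x.
Proof. exact (continuous_const (U:=R_UniformSpace) (V:=R_UniformSpace) c x). Qed.
Lemma Rc_ext (f g : R -> R) x : (forall y, f y = g y) -> continuous f x -> continuous g x.
Proof. intros E F. eapply continuous_ext; eauto. Qed.

Definition CC (u : R -> C) (x : R) : Prop :=
  continuous (fun y => fst (u y)) x /\ continuous (fun y => snd (u y)) x.

Lemma CC_ext u v x : (forall y, u y = v y) -> CC u x -> CC v x.
Proof. intros E [H1 H2]; split.
  apply Rc_ext with (f := fun y => fst (u y)); auto. intros y; rewrite E; reflexivity.
  apply Rc_ext with (f := fun y => snd (u y)); auto. intros y; rewrite E; reflexivity. Qed.

Lemma CC_plus u v x : CC u x -> CC v x -> CC (fun y => u y + v y)%C x.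
Proof. intros [U1 U2] [V1 V2]; split; simpl; apply Rc_plus; auto. Qed.

Lemma CC_opp u x : CC u x -> CC (fun y => - u y)%C x.
Proof. intros [U1 U2]; split; simpl; apply Rc_opp; auto. Qed.

Lemma CC_minus u v x : CC u x -> CC v x -> CC (fun y => u y - v y)%C x.
Proof. intros; apply CC_plus; auto; apply CC_opp; auto. Qed.

Lemma CC_mult u v x : CC u x -> CC v x -> CC (fun y => u y * v y)%C x.
Proof.
  intros [U1 U2] [V1 V2]; split; simpl.
  - apply Rc_minus; apply Rc_mult; auto.
  - apply Rc_plus; apply Rc_mult; auto.
Qed.

Lemma CC_const c x : CC (fun _ => c) x.
Proof. split; apply Rc_const. Qed.

Lemma CC_RtoC (h : R -> R) x : continuous h x -> CC (fun y => RtoC (h y)) x.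
Proof. intros; split; simpl; auto. apply Rc_const. Qed.

Lemma CC_expi (h : R -> R) x : continuous h x -> CC (fun y => expi (h y)) x.
Proof. intros; split; simpl. apply continuous_cos_comp; auto. apply continuous_sin_comp; auto. Qed.

Lemma CC_comp (u : R -> C) (h : R -> R) x : CC u (h x) -> continuous h x -> CC (fun y => u (h y)) x.
Proof.
  intros [U1 U2] Hh; split.
  - exact (continuous_comp h (fun s => fst (u s)) x Hh U1).
  - exact (continuous_comp h (fun s => snd (u s)) x Hh U2).
Qed.

Lemma CC_of_cont (u : R -> C) x : continuous (T:=R_UniformSpace) (U:=C_UniformSpace) u x -> CC u x.
Proof.
  intros Hu. split.
  - apply (continuous_comp (U:=R_UniformSpace) (V:=C_UniformSpace) (W:=R_UniformSpace) u fst x Hu).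
    destruct (u x) as [p q]. apply (continuous_fst (U:=R_UniformSpace) (V:=R_UniformSpace) p q).
  - apply (continuous_comp (U:=R_UniformSpace) (V:=C_UniformSpace) (W:=R_UniformSpace) u snd x Hu).
    destruct (u x) as [p q]. apply (continuous_snd (U:=R_UniformSpace) (V:=R_UniformSpace) p q).
Qed.

Lemma Cmod_cont (u : R -> C) x : CC u x -> continuous (fun y => Cmod (u y)) x.
Proof.
  intros [U1 U2]. unfold Cmod. apply continuous_sqrt_comp.
  apply Rc_plus.
  - apply Rc_ext with (f := fun y => fst (u y) * fst (u y)). intros; simpl; ring. apply Rc_mult; auto.
  - apply Rc_ext with (f := fun y => snd (u y) * snd (u y)). intros; simpl; ring. apply Rc_mult; auto.
Qed.

Lemma ex_RInt_C (u : R -> C) a b : (forall x, CC u x) -> ex_RInt (V:=C_R_CompleteNormedModule) u a b.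
Proof.
  intros Hu.
  destruct (ex_RInt_continuous (V:=R_CompleteNormedModule) (fun y => fst (u y)) a b) as [l1 H1].
  { intros; apply Hu. }
  destruct (ex_RInt_continuous (V:=R_CompleteNormedModule) (fun y => snd (u y)) a b) as [l2 H2].
  { intros; apply Hu. }
  exists (l1, l2).
  exact (is_RInt_fct_extend_pair (U:=R_NormedModule) (V:=R_NormedModule) u a b l1 l2 H1 H2).
Qed.

Lemma CS (u v : C) : fst u * fst v + snd u * snd v <= Cmod u * Cmod v.
Proof.
  unfold Cmod. rewrite <- sqrt_mult_alt by nra.
  eapply Rle_trans. apply Rle_abs. rewrite <- sqrt_Rsqr_abs. apply sqrt_le_1_alt.
  unfold Rsqr. simpl.
  pose proof (Rle_0_sqr (fst u * snd v - snd u * fst v)). unfold Rsqr in H. nra.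
Qed.

Lemma Cmod_RInt_le (K : R -> C) (M : R -> R) a b I J : a <= b ->
  is_RInt (V:=C_R_NormedModule) K a b I -> is_RInt M a b J ->
  (forall x, a < x < b -> Cmod (K x) <= M x) -> Cmod I <= J.
Proof.
  intros Hab HK HM HKM.
  assert (H1 := is_RInt_fct_extend_fst (U:=R_NormedModule) (V:=R_NormedModule) K a b I HK).
  assert (H2 := is_RInt_fct_extend_snd (U:=R_NormedModule) (V:=R_NormedModule) K a b I HK).
  assert (H3 : is_RInt (fun x => fst I * fst (K x) + snd I * snd (K x)) a b (fst I * fst I + snd I * snd I)).
  { apply (is_RInt_plus (V:=R_NormedModule) (fun x => fst I * fst (K x)) (fun x => snd I * snd (K x))).
    - exact (is_RInt_scal (V:=R_NormedModule) _ a b (fst I) _ H1).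
    - exact (is_RInt_scal (V:=R_NormedModule) _ a b (snd I) _ H2). }
  assert (H4 : is_RInt (fun x => Cmod I * M x) a b (Cmod I * J)).
  { exact (is_RInt_scal (V:=R_NormedModule) _ a b (Cmod I) _ HM). }
  assert (Hle := is_RInt_le _ _ a b _ _ Hab H3 H4).
  assert (HJ : 0 <= J).
  { apply (is_RInt_ge_0 M a b J Hab HM). intros x Hx. eapply Rle_trans; [apply Cmod_ge_0|]. apply HKM; auto. }
  assert (HI2 : fst I * fst I + snd I * snd I = Cmod I * Cmod I).
  { unfold Cmod. rewrite sqrt_sqrt. simpl; ring. simpl; nra. }
  assert (Hle' : Cmod I * Cmod I <= Cmod I * J).
  { rewrite <- HI2. apply Hle. intros x Hx.
    eapply Rle_trans. apply (CS I (K x)). apply Rmult_le_compat_l. apply Cmod_ge_0. apply HKM; auto. }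
  destruct (Req_dec (Cmod I) 0) as [E|E]. rewrite E; auto.
  assert (0 < Cmod I) by (assert (0 <= Cmod I) by apply Cmod_ge_0; lra).
  apply Rmult_le_reg_l with (Cmod I); auto.
Qed.

Lemma CD_CC u x du : CD u x du -> CC u x.
Proof.
  intros [H1 H2]; split.
  - exact (ex_derive_continuous (K:=R_AbsRing) (V:=R_NormedModule) _ x (ex_intro _ _ H1)).
  - exact (ex_derive_continuous (K:=R_AbsRing) (V:=R_NormedModule) _ x (ex_intro _ _ H2)).
Qed.

Lemma cc_of_clamp (h ht : R -> R) a b : (forall x, continuous ht x) ->
  (forall x, a <= x <= b -> ht x = h x) -> continuous_on_cc h a b.
Proof.
  intros Hc E x Hx P HP. unfold filtermap, within.
  rewrite <- (E x Hx) in HP.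
  specialize (Hc x P HP). unfold filtermap in Hc.
  eapply filter_imp; [|exact Hc]. intros y Hy Dy. rewrite <- (E y Dy). exact Hy.
Qed.

Lemma wFTC_C (H k : R -> C) a b : a < b ->
  (forall x, a < x < b -> CD H x (k x)) -> (forall x, CC k x) ->
  continuous_on_cc (fun y => fst (H y)) a b -> continuous_on_cc (fun y => snd (H y)) a b ->
  is_RInt (V:=C_R_NormedModule) k a b (H b - H a)%C.
Proof.
  intros Hab HD Hk C1 C2.
  assert (H1 := wFTC (fun y => fst (H y)) (fun y => fst (k y)) a b Hab (fun x Hx => proj1 (HD x Hx)) (fun x => proj1 (Hk x)) C1).
  assert (H2 := wFTC (fun y => snd (H y)) (fun y => snd (k y)) a b Hab (fun x Hx => proj2 (HD x Hx)) (fun x => proj2 (Hk x)) C2).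
  assert (H3 := is_RInt_fct_extend_pair (U:=R_NormedModule) (V:=R_NormedModule) k a b _ _ H1 H2).
  replace ((H b - H a)%C) with ((fst (H b) - fst (H a), snd (H b) - snd (H a))). exact H3.
  reflexivity.
Qed.

Lemma Cmod_expi t : Cmod (expi t) = 1.
Proof. unfold Cmod, expi. cbn [fst snd]. replace (cos t ^ 2 + sin t ^ 2) with 1. apply sqrt_1.
  rewrite <- (sin2_cos2 t). unfold Rsqr. ring. Qed.

Lemma Em1 : RtoC (-1) = (- RtoC 1)%C.
Proof. unfold RtoC, Copp; simpl. f_equal; ring. Qed.

Theorem lemma8p7 (a b : R) (f : R -> C) (g dg : R -> R) (p : list C) :
  a < b ->
  continuous_on_cc f a b ->
  C1_on_cc g dg a b ->
  (forall x, a <= x <= b -> 0 < Rabs (dg x)) ->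
  Cmod ( (@RInt C_R_CompleteNormedModule (fun x => (expi (g x) * f x)%C) a b
          - expi (g a) * sum_n (fun k => (Ci ^ (k + 1) * poly_eval (poly_deriv_n k p) (RtoC (g a)))%C) (poly_deg p)
          + expi (g b) * sum_n (fun k => (Ci ^ (k + 1) * poly_eval (poly_deriv_n k p) (RtoC (g b)))%C) (poly_deg p))%C )
  <= RInt (fun x => Cmod (f x - poly_eval p (RtoC (g x)) * RtoC (dg x))%C) a b.
Proof.
  intros Hab Hf [Gc [Gd DGc]] _.
  assert (Hab' : a <= b) by lra.
  set (N := poly_deg p).
  set (cl := clamp a b).
  assert (Ecl : forall x, a <= x <= b -> cl x = x) by (intros; apply clamp_id; auto).
  assert (Cf : forall x, CC (fun y => f (cl y)) x).
  { intros x. apply CC_of_cont. exact (cont_clamp f a b x Hab' Hf). }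
  assert (Cg : forall x, continuous (fun y => g (cl y)) x).
  { intros x. exact (cont_clamp g a b x Hab' Gc). }
  assert (Cdg : forall x, continuous (fun y => dg (cl y)) x).
  { intros x. exact (cont_clamp dg a b x Hab' DGc). }
  assert (CP : forall cs z, CC (fun s => poly_eval cs (RtoC s)) z).
  { intros cs z. eapply CD_CC. apply CD_poly. }
  assert (CSs : forall z, CC (fun s => Ssum p N (RtoC s)) z).
  { intros z. eapply CD_CC. apply CD_Ssum. }
  set (K0 := fun x => (expi (g x) * f x)%C).
  set (Kp := fun x => (expi (g x) * (poly_eval p (RtoC (g x)) * RtoC (dg x)))%C).
  set (H := fun x => (expi (g x) * Ssum p N (RtoC (g x)) * RtoC (-1))%C).
  set (Kpt := fun x => Kp (cl x)).
  set (Ht := fun x => H (cl x)).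
  assert (CKpt : forall x, CC Kpt x).
  { intros x. unfold Kpt, Kp. apply CC_mult. apply CC_expi; auto.
    apply CC_mult. apply (CC_comp (fun s => poly_eval p (RtoC s))); auto. apply CC_RtoC; auto. }
  assert (CHt : forall x, CC Ht x).
  { intros x. unfold Ht, H. apply CC_mult. apply CC_mult. apply CC_expi; auto.
    apply (CC_comp (fun s => Ssum p N (RtoC s))); auto. apply CC_const. }
  assert (IKp : is_RInt (V:=C_R_NormedModule) Kp a b (H b - H a)%C).
  { apply is_RInt_ext with Kpt.
    { intros x Hx. unfold Kpt. rewrite Ecl; auto. unfold Rmin, Rmax in Hx; destruct Rle_dec; lra. }
    apply (wFTC_C H Kpt a b Hab).
    - intros x Hx. unfold Kpt. rewrite Ecl by lra.
      eapply CD_eq.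
      + apply (CD_mult (fun s => expi (g s) * Ssum p N (RtoC (g s)))%C (fun _ => RtoC (-1))).
        * apply (CD_mult (fun s => expi (g s)) (fun s => Ssum p N (RtoC (g s)))).
          -- apply (CD_comp expi g). apply CD_expi. apply Gd; auto.
          -- apply (CD_comp (fun s => Ssum p N (RtoC s)) g). apply CD_Ssum. apply Gd; auto.
        * apply CD_const.
      + unfold Kp.
        assert (E := Ssum_rel p N (RtoC (g x))).
        rewrite (allz_eval _ _ (deriv_top N p eq_refl)) in E.
        revert E. generalize (expi (g x)) (Ssum p N (RtoC (g x))) (Ssum' p N (RtoC (g x)))
          (poly_eval p (RtoC (g x))) (RtoC (dg x)) (Ci ^ (N + 1))%C.
        intros E0 S0 S1 P0 D0 c0 E.
        transitivity (E0 * (Ci * S0 + S1) * D0 * RtoC (-1))%C.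
        ring. rewrite E. rewrite Em1. ring.
    - exact CKpt.
    - apply (cc_of_clamp _ (fun y => fst (Ht y))). intros y; exact (proj1 (CHt y)).
      intros y Hy; unfold Ht; rewrite (Ecl y Hy); reflexivity.
    - apply (cc_of_clamp _ (fun y => snd (Ht y))). intros y; exact (proj2 (CHt y)).
      intros y Hy; unfold Ht; rewrite (Ecl y Hy); reflexivity. }
  assert (IK0 : is_RInt (V:=C_R_NormedModule) K0 a b (RInt (V:=C_R_CompleteNormedModule) K0 a b)).
  { apply (RInt_correct (V:=C_R_CompleteNormedModule)).
    apply ex_RInt_ext with (fun x => K0 (cl x)).
    { intros x Hx. rewrite Ecl; auto. unfold Rmin, Rmax in Hx; destruct Rle_dec; lra. }
    apply ex_RInt_C. intros x. unfold K0. apply CC_mult. apply CC_expi; auto. apply Cf. }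
  assert (IK := is_RInt_minus (V:=C_R_NormedModule) K0 Kp a b _ _ IK0 IKp).
  set (M := fun x => Cmod (f x - poly_eval p (RtoC (g x)) * RtoC (dg x))%C).
  assert (IM : is_RInt M a b (RInt M a b)).
  { apply (RInt_correct (V:=R_CompleteNormedModule)).
    apply ex_RInt_ext with (fun x => M (cl x)).
    { intros x Hx. rewrite Ecl; auto. unfold Rmin, Rmax in Hx; destruct Rle_dec; lra. }
    apply (ex_RInt_continuous (V:=R_CompleteNormedModule)). intros z _. unfold M. apply Cmod_cont.
    apply CC_minus. apply Cf. apply CC_mult. apply (CC_comp (fun s => poly_eval p (RtoC s))); auto.
    apply CC_RtoC; auto. }
  assert (Fin := Cmod_RInt_le _ M a b _ _ Hab' IK IM).
  fold M. fold K0.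
  replace ((RInt (V:=C_R_CompleteNormedModule) K0 a b - expi (g a) * sum_n (fun k => Ci ^ (k + 1) * poly_eval (poly_deriv_n k p) (RtoC (g a))) N +
    expi (g b) * sum_n (fun k => Ci ^ (k + 1) * poly_eval (poly_deriv_n k p) (RtoC (g b))) N)%C)
    with (RInt (V:=C_R_CompleteNormedModule) K0 a b - (H b - H a))%C.
  apply Fin.
  - intros x _. unfold M, K0, Kp. right.
    change (minus ?u ?v) with (u - v)%C.
    replace (expi (g x) * f x - expi (g x) * (poly_eval p (RtoC (g x)) * RtoC (dg x)))%C
      with (expi (g x) * (f x - poly_eval p (RtoC (g x)) * RtoC (dg x)))%C by ring.
    rewrite Cmod_mult, Cmod_expi. ring.
  - unfold H, Ssum. rewrite Em1. ring.
Qed.
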